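(* Let $\lambda\in\mathbb{C}^*$ and $\alpha_1,\alpha_2,\beta_1,\beta_2\in\mathbb{C}$ with $(\alpha_1,\beta_1)\neq(0,0)$ and $(\alpha_2,\beta_2)\neq(0,0)$. Consider the tensor product $\mathcal{L}$-module $\Omega(\lambda,\alpha_1,\beta_1)\otimes\Omega(\lambda,\alpha_2,\beta_2)$ (both factors being $\mathbb{C}[Y]$), and let $U=\mathrm{span}\{\sum_{t=0}^{j}\binom{j}{t}Y^{j-t}\otimes Y^t\mid j\in\mathbb{N}\}$. Then $U$ is a nonzero proper $\mathcal{L}$-submodule of $\Omega(\lambda,\alpha_1,\beta_1)\otimes\Omega(\lambda,\alpha_2,\beta_2)$; consequently $\Omega(\lambda,\alpha_1,\beta_1)\otimes\Omega(\lambda,\alpha_2,\beta_2)$ is a reducible $\mathcal{L}$-module.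
   Context: The (centerless) Heisenberg-Virasoro algebra $\mathcal{L}$ is the complex Lie algebra with basis $\{L_m,H_m\mid m\in\mathbb{Z}\}$ and brackets $[L_m,L_n]=(n-m)L_{m+n}$, $[L_m,H_n]=nH_{m+n}$, $[H_m,H_n]=0$. For $\lambda\in\mathbb{C}^*$ and $\alpha,\beta\in\mathbb{C}$, $\Omega(\lambda,\alpha,\beta)$ denotes the $\mathcal{L}$-module $\mathbb{C}[Y]$ with $L_m f(Y)=\lambda^m(Y+m\alpha)f(Y-m)$ and $H_m f(Y)=\beta\lambda^m f(Y-m)$ for $m\in\mathbb{Z}$. The tensor product has action $x(v\otimes w)=xv\otimes w+v\otimes xw$. $\mathbb{N}$ denotes non-negative integers. *)

(* Defs.v *)
From HB Require Import structures.
From mathcomp Require Import all_boot all_order all_algebra.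
From mathcomp Require Import complex.
From mathcomp Require Import reals.
Set Implicit Arguments. Unset Strict Implicit. Unset Printing Implicit Defensive.
Import Order.TTheory GRing.Theory Num.Theory.
Local Open Scope ring_scope.

Section Defs.
Variable K : fieldType.

Definition OmL (lam a : K) (m : int) (f : {poly K}) : {poly K} :=
  lam ^ m *: (('X + (m%:~R * a)%:P) * (f \Po ('X - (m%:~R)%:P))).
Definition OmH (lam b : K) (m : int) (f : {poly K}) : {poly K} :=
  (b * lam ^ m) *: (f \Po ('X - (m%:~R)%:P)).

(* K[Y] (x) K[Y] is identified with {poly {poly K}}: p (x) q  |->  p(Y1) q(Y2),
   the outer variable being Y1 (first factor), the inner one Y2 (second). *)
Definition tens (p q : {poly K}) : {poly {poly K}} := map_poly polyC p * q%:P.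

(* T (x) id and id (x) T for linear T : K[Y] -> K[Y],
   defined on F = sum_i Y1^i (x) F_i. *)
Definition lift1 (T : {poly K} -> {poly K}) (F : {poly {poly K}}) : {poly {poly K}} :=
  \sum_(i < size F) tens (T 'X^i) F`_i.
Definition lift2 (T : {poly K} -> {poly K}) (F : {poly {poly K}}) : {poly {poly K}} :=
  \sum_(i < size F) tens 'X^i (T F`_i).

(* action on the tensor product: x (v (x) w) = x v (x) w + v (x) x w *)
Definition TL (lam a1 a2 : K) (m : int) (F : {poly {poly K}}) :=
  lift1 (OmL lam a1 m) F + lift2 (OmL lam a2 m) F.
Definition TH (lam b1 b2 : K) (m : int) (F : {poly {poly K}}) :=
  lift1 (OmH lam b1 m) F + lift2 (OmH lam b2 m) F.

Definition is_submodule (lam a1 b1 a2 b2 : K) (S : {poly {poly K}} -> Prop) :=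
  [/\ S 0,
      (forall F G, S F -> S G -> S (F + G)),
      (forall (c : K) F, S F -> S (c%:P%:P * F)),
      (forall m F, S F -> S (TL lam a1 a2 m F)) &
      (forall m F, S F -> S (TH lam b1 b2 m F))].

Definition nonzero_proper (S : {poly {poly K}} -> Prop) :=
  (exists F, S F /\ F <> 0) /\ (exists F, ~ S F).

Definition reducible (lam a1 b1 a2 b2 : K) :=
  exists S, is_submodule lam a1 b1 a2 b2 S /\ nonzero_proper S.

Definition ugen (j : nat) : {poly {poly K}} :=
  \sum_(t < j.+1) tens 'X^(j - t) 'X^t *+ 'C(j, t).

Definition Uspan (F : {poly {poly K}}) : Prop :=
  exists (n : nat) (c : nat -> K), F = \sum_(j < n) (c j)%:P%:P * ugen j.
End Defs.

(* Main.v *)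
Require Import Defs.
From HB Require Import structures.
From mathcomp Require Import all_boot all_order all_algebra.
From mathcomp Require Import complex.
From mathcomp Require Import reals.
From mathcomp Require Import ring.
Import Order.TTheory GRing.Theory Num.Theory.
Local Open Scope ring_scope.

Section Aux.
Variable K : fieldType.
Local Notation PP := {poly {poly K}}.

Definition cc : {rmorphism K -> PP} := (polyC \o polyC)%FUN.
Definition Y1 : PP := 'X.
Definition Y2 : PP := ('X : {poly K})%:P.
Definition SS : PP := Y1 + Y2.

Lemma ccE c : cc c = c%:P%:P. Proof. by []. Qed.

Lemma cfu : commr_rmorph cc SS. Proof. by move=> x; rewrite /GRing.comm mulrC. Qed.
Notation Phi := (horner_morph cfu).

Lemma tensX k t : Y1 ^+ k * Y2 ^+ t = tens 'X^k 'X^t.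
Proof. by rewrite /tens map_polyXn rmorphXn. Qed.

Lemma ugenE j : ugen K j = SS ^+ j.
Proof. by rewrite /ugen /SS exprDn; apply: eq_bigr => t _; rewrite tensX. Qed.

Lemma sum_widen (V : nmodType) m n (g : nat -> V) : (m <= n)%N ->
  (forall i, (m <= i)%N -> g i = 0) -> \sum_(i < n) g i = \sum_(i < m) g i.
Proof.
move=> mn h; rewrite -!(big_mkord xpredT) (big_cat_nat (leq0n m) mn) /=.
rewrite big_nat_cond [X in _ + X]big_nat_cond [X in _ + X]big1 ?addr0 //.
by move=> i /andP[/andP[hi _] _]; exact: h.
Qed.

Lemma tens0r (p : {poly K}) : tens p 0 = 0. Proof. by rewrite /tens mulr0. Qed.

Lemma lift1_n (T : {poly K} -> {poly K}) (F : PP) n : (size F <= n)%N ->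
  lift1 T F = \sum_(i < n) tens (T 'X^i) F`_i.
Proof.
move=> h; rewrite /lift1 (@sum_widen _ _ _ (fun i => tens (T 'X^i) F`_i) h) //.
by move=> i hi; rewrite nth_default // tens0r.
Qed.

Lemma lift2_n (T : {poly K} -> {poly K}) (F : PP) n : T 0 = 0 -> (size F <= n)%N ->
  lift2 T F = \sum_(i < n) tens 'X^i (T F`_i).
Proof.
move=> T0 h; rewrite /lift2 (@sum_widen _ _ _ (fun i => tens 'X^i (T F`_i)) h) //.
by move=> i hi; rewrite nth_default // T0 tens0r.
Qed.

Lemma lift1D (T : {poly K} -> {poly K}) (F G : PP) : lift1 T (F + G) = lift1 T F + lift1 T G.
Proof.
set n := maxn (size F) (size G).
rewrite (@lift1_n T (F + G) n); last exact: size_polyD.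
rewrite (@lift1_n T F n) ?leq_maxl // (@lift1_n T G n) ?leq_maxr //.
by rewrite -big_split; apply: eq_bigr => i _; rewrite coefD /tens rmorphD mulrDr.
Qed.

Lemma lift1_0 (T : {poly K} -> {poly K}) : lift1 T 0 = 0.
Proof. by rewrite /lift1 size_poly0 big_ord0. Qed.

Lemma lift1Z (T : {poly K} -> {poly K}) c (F : PP) : lift1 T (cc c * F) = cc c * lift1 T F.
Proof.
rewrite (@lift1_n T _ (size F)); last by rewrite ccE mul_polyC size_scale_leq.
rewrite /lift1 mulr_sumr; apply: eq_bigr => i _.
rewrite ccE coefCM /tens polyCM.
move: (T 'X^i)^:P (c%:P)%:P (F`_i)%:P => x y z; ring.
Qed.

Lemma lift1_sum (T : {poly K} -> {poly K}) I r (P : pred I) (Fs : I -> PP) :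
  lift1 T (\sum_(i <- r | P i) Fs i) = \sum_(i <- r | P i) lift1 T (Fs i).
Proof. exact: (big_morph _ (lift1D T) (lift1_0 T)). Qed.

Lemma lift1Mn (T : {poly K} -> {poly K}) (F : PP) k : lift1 T (F *+ k) = lift1 T F *+ k.
Proof. by rewrite -[F *+ k]mulr_natl -[lift1 T F *+ k]mulr_natl -(rmorph_nat cc) lift1Z. Qed.

Section Lin.
Variable T : {poly K} -> {poly K}.
Hypothesis TD : forall p q, T (p + q) = T p + T q.
Hypothesis TZ : forall (c : K) p, T (c *: p) = c *: T p.

Lemma T0 : T 0 = 0.
Proof. by have := TZ 0 0; rewrite !scale0r. Qed.

Lemma TC c p : T (c%:P * p) = c%:P * T p.
Proof. by rewrite !mul_polyC TZ. Qed.

Lemma Tsum I r (P : pred I) (Fs : I -> {poly K}) :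
  T (\sum_(i <- r | P i) Fs i) = \sum_(i <- r | P i) T (Fs i).
Proof. exact: (big_morph _ TD T0). Qed.

Lemma lift2D (F G : PP) : lift2 T (F + G) = lift2 T F + lift2 T G.
Proof.
set n := maxn (size F) (size G).
rewrite (@lift2_n T (F + G) n) ?T0 //; last exact: size_polyD.
rewrite (@lift2_n T F n) ?T0 ?leq_maxl // (@lift2_n T G n) ?T0 ?leq_maxr //.
by rewrite -big_split; apply: eq_bigr => i _; rewrite coefD TD /tens rmorphD mulrDr.
Qed.

Lemma lift2_0 : lift2 T 0 = 0.
Proof. by rewrite /lift2 size_poly0 big_ord0. Qed.

Lemma lift2Z c (F : PP) : lift2 T (cc c * F) = cc c * lift2 T F.
Proof.
rewrite (@lift2_n T _ (size F)) ?T0 //; last by rewrite ccE mul_polyC size_scale_leq.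
rewrite /lift2 mulr_sumr; apply: eq_bigr => i _.
rewrite ccE coefCM TC /tens polyCM.
move: ('X^i)^:P (c%:P)%:P (T F`_i)%:P => x y z; ring.
Qed.

Lemma lift2_sum I r (P : pred I) (Fs : I -> PP) :
  lift2 T (\sum_(i <- r | P i) Fs i) = \sum_(i <- r | P i) lift2 T (Fs i).
Proof. exact: (big_morph _ lift2D lift2_0). Qed.

Lemma lift2Mn (F : PP) k : lift2 T (F *+ k) = lift2 T F *+ k.
Proof. by rewrite -[F *+ k]mulr_natl -[lift2 T F *+ k]mulr_natl -(rmorph_nat cc) lift2Z. Qed.

Lemma tens_size (A B : {poly K}) : (size (tens A B) <= size A)%N.
Proof.
rewrite /tens mulrC mul_polyC (leq_trans (size_scale_leq _ _)) //.
by rewrite size_map_polyC.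
Qed.

Lemma coef_tens (A B : {poly K}) i : (tens A B)`_i = (A`_i)%:P * B.
Proof. by rewrite /tens coefMC coef_map. Qed.

Lemma lift1_tens (A B : {poly K}) : lift1 T (tens A B) = tens (T A) B.
Proof.
rewrite (@lift1_n T _ _ (tens_size A B)).
rewrite [in RHS](_ : A = \sum_(i < size A) A`_i *: 'X^i); last by rewrite -poly_def coefK.
rewrite Tsum /tens rmorph_sum mulr_suml.
apply: eq_bigr => i _; rewrite coef_tens TZ -mul_polyC rmorphM /= map_polyC /= polyCM.
move: (T 'X^i)^:P ((A`_i)%:P)%:P B%:P => x y z; ring.
Qed.

Lemma lift2_tens (A B : {poly K}) : lift2 T (tens A B) = tens A (T B).
Proof.
rewrite (@lift2_n T _ _ T0 (tens_size A B)).
rewrite [in RHS](_ : A = \sum_(i < size A) A`_i *: 'X^i); last by rewrite -poly_def coefK.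
rewrite /tens rmorph_sum mulr_suml.
apply: eq_bigr => i _; rewrite coef_tens TC -mul_polyC rmorphM /= map_polyC /= polyCM.
move: ('X^i)^:P ((A`_i)%:P)%:P (T B)%:P => x y z; ring.
Qed.

Variables (P0 : {poly K}) (d : K).
Hypothesis TX : forall k, T 'X^k = P0 * ('X - d%:P) ^+ k.

Lemma lift1_S i : lift1 T (SS ^+ i) = map_poly polyC P0 * (SS - cc d) ^+ i.
Proof.
have -> : SS - cc d = (Y1 - cc d) + Y2 by rewrite /SS addrAC.
rewrite {1}/SS !exprDn lift1_sum mulr_sumr; apply: eq_bigr => t _.
rewrite lift1Mn tensX lift1_tens TX /tens mulrnAr; congr (_ *+ _).
rewrite rmorphM rmorphXn rmorphB /= map_polyX map_polyC /= rmorphXn /Y1 /Y2.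
by rewrite -mulrA.
Qed.

Lemma lift2_S i : lift2 T (SS ^+ i) = P0%:P * (SS - cc d) ^+ i.
Proof.
have -> : SS - cc d = Y1 + (Y2 - cc d) by rewrite /SS addrA.
rewrite {1}/SS !exprDn lift2_sum mulr_sumr; apply: eq_bigr => t _.
rewrite lift2Mn tensX lift2_tens TX /tens mulrnAr; congr (_ *+ _).
rewrite map_polyXn rmorphM rmorphXn rmorphB /= /Y1 /Y2.
by rewrite mulrCA.
Qed.
End Lin.

Lemma PhiX : Phi 'X = SS. Proof. exact: horner_morphX. Qed.
Lemma PhiC c : Phi c%:P = cc c. Proof. exact: horner_morphC. Qed.

Lemma PhiE p : Phi p = \sum_(i < size p) cc p`_i * SS ^+ i.
Proof.
rewrite {1}[p](_ : p = \sum_(i < size p) (p`_i)%:P * 'X^i); last first.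
  by rewrite -{1}[p]coefK poly_def; apply: eq_bigr => i _; rewrite mul_polyC.
rewrite rmorph_sum; apply: eq_bigr => i _; by rewrite rmorphM rmorphXn /= /= PhiC PhiX.
Qed.

Definition Uset (F : PP) := exists p, F = Phi p.

Lemma UspanP F : Uspan F <-> Uset F.
Proof.
split.
  move=> [n [c ->]]; exists (\sum_(j < n) (c j)%:P * 'X^j).
  rewrite rmorph_sum; apply: eq_bigr => j _.
  by rewrite rmorphM rmorphXn /= PhiC PhiX ugenE.
move=> [p ->]; exists (size p), (fun j => p`_j); rewrite PhiE.
by apply: eq_bigr => j _; rewrite ugenE.
Qed.

Section Lin2.
Variables T1 T2 : {poly K} -> {poly K}.
Hypothesis TD : forall p q, T2 (p + q) = T2 p + T2 q.
Hypothesis TZ : forall (c : K) p, T2 (c *: p) = c *: T2 p.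

Lemma lift_Phi (q : nat -> {poly K}) :
  (forall i, lift1 T1 (SS ^+ i) + lift2 T2 (SS ^+ i) = Phi (q i)) ->
  forall p, Uset (lift1 T1 (Phi p) + lift2 T2 (Phi p)).
Proof.
move=> hq p; exists (\sum_(i < size p) (p`_i)%:P * q i).
rewrite PhiE lift1_sum (@lift2_sum T2 TD TZ) -big_split rmorph_sum.
apply: eq_bigr => i _ /=.
by rewrite lift1Z (@lift2Z T2 TZ) -mulrDr hq rmorphM /= PhiC.
Qed.
End Lin2.

Lemma evPhi s t p : ((Phi p).[s%:P]).[t] = p.[s + t].
Proof.
rewrite PhiE [RHS]horner_coef !horner_sum; apply: eq_bigr => i _.
by rewrite !hornerE /SS /Y1 /Y2.
Qed.

Lemma notU : ~ Uset Y1.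
Proof.
move=> [p hp].
have h1 := evPhi 1 0 p; have h2 := evPhi 0 1 p.
rewrite -hp addr0 in h1; rewrite -hp add0r -h1 /Y1 !hornerE in h2.
by move/eqP: h2; rewrite eq_sym oner_eq0.
Qed.

Section Om.
Variables (lam a b : K) (m : int).

Lemma OmL_D p q : OmL lam a m (p + q) = OmL lam a m p + OmL lam a m q.
Proof. by rewrite /OmL comp_polyD mulrDr scalerDr. Qed.
Lemma OmL_Z c p : OmL lam a m (c *: p) = c *: OmL lam a m p.
Proof. by rewrite /OmL comp_polyZ -scalerAr !scalerA mulrC. Qed.
Lemma OmL_X k : OmL lam a m 'X^k =
  (lam ^ m *: ('X + (m%:~R * a)%:P)) * ('X - (m%:~R)%:P) ^+ k.
Proof. by rewrite /OmL comp_Xn_poly scalerAl. Qed.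

Lemma OmH_D p q : OmH lam b m (p + q) = OmH lam b m p + OmH lam b m q.
Proof. by rewrite /OmH comp_polyD scalerDr. Qed.
Lemma OmH_Z c p : OmH lam b m (c *: p) = c *: OmH lam b m p.
Proof. by rewrite /OmH comp_polyZ !scalerA mulrC. Qed.
Lemma OmH_X k : OmH lam b m 'X^k =
  (b * lam ^ m)%:P * ('X - (m%:~R)%:P) ^+ k.
Proof. by rewrite /OmH comp_Xn_poly mul_polyC. Qed.
End Om.

Lemma TL_U lam a1 a2 m F : Uset F -> Uset (TL lam a1 a2 m F).
Proof.
move=> [p ->]; rewrite /TL.
apply: (@lift_Phi _ _ (OmL_D lam a2 m) (OmL_Z lam a2 m)
  (fun i => (lam ^ m)%:P * ('X + (m%:~R * a1 + m%:~R * a2)%:P)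
                      * ('X - (m%:~R)%:P) ^+ i)) => i.
rewrite (@lift1_S _ (OmL_D lam a1 m) (OmL_Z lam a1 m) _ _ (OmL_X lam a1 m)).
rewrite (@lift2_S _ (OmL_D lam a2 m) (OmL_Z lam a2 m) _ _ (OmL_X lam a2 m)).
rewrite -mulrDl [RHS]rmorphM /= [in RHS]rmorphXn /= [in RHS]rmorphB /= PhiX PhiC; congr (_ * _).
rewrite [RHS]rmorphM /= [in RHS]rmorphD /= PhiX !PhiC map_polyZ -!mul_polyC rmorphD /= map_polyX map_polyC /=.
rewrite !(polyCM, polyCD) -mulrDr; congr (_ * _).
by rewrite addrACA.
Qed.

Lemma TH_U lam b1 b2 m F : Uset F -> Uset (TH lam b1 b2 m F).
Proof.
move=> [p ->]; rewrite /TH.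
apply: (@lift_Phi _ _ (OmH_D lam b2 m) (OmH_Z lam b2 m)
  (fun i => (b1 * lam ^ m + b2 * lam ^ m)%:P * ('X - (m%:~R)%:P) ^+ i)) => i.
rewrite (@lift1_S _ (OmH_D lam b1 m) (OmH_Z lam b1 m) _ _ (OmH_X lam b1 m)).
rewrite (@lift2_S _ (OmH_D lam b2 m) (OmH_Z lam b2 m) _ _ (OmH_X lam b2 m)).
rewrite -mulrDl [RHS]rmorphM /= [in RHS]rmorphXn /= [in RHS]rmorphB /= PhiX !PhiC; congr (_ * _).
by rewrite map_polyC /= !polyCD.
Qed.

End Aux.

Theorem mainTheorem15 (R : realType) (lam a1 b1 a2 b2 : R[i])
  (hlam : lam != 0) (h1 : (a1, b1) != (0, 0)) (h2 : (a2, b2) != (0, 0)) :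
  (is_submodule lam a1 b1 a2 b2 (@Uspan R[i]) /\ nonzero_proper (@Uspan R[i]))
  /\ reducible lam a1 b1 a2 b2.
Proof.
have sub : is_submodule lam a1 b1 a2 b2 (@Uspan R[i]).
  split.
  - by exists 0%N, (fun _ => 0); rewrite big_ord0.
  - move=> F G /UspanP [p ->] /UspanP [q ->]; apply/UspanP.
    by exists (p + q); rewrite rmorphD.
  - move=> c F /UspanP [p ->]; apply/UspanP.
    by exists (c%:P * p); rewrite rmorphM /= PhiC.
  - by move=> m F /UspanP hF; apply/UspanP; apply: TL_U.
  - by move=> m F /UspanP hF; apply/UspanP; apply: TH_U.
have np : nonzero_proper (@Uspan R[i]).
  split.
    exists (1 : {poly {poly R[i]}}); split; last by apply/eqP; exact: oner_neq0.
    exists 1%N, (fun _ => 1); rewrite big_ord1 ugenE expr0 mulr1.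
    by rewrite !polyC1.
  by exists (Y1 R[i]) => /UspanP; apply: notU.
split => //; by exists (@Uspan R[i]).
Qed.
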